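(* Let $(P_1,\dots,P_J)$ be a stochastically rationalizable stochastic demand system assigning probability zero to patches that lie on more than one budget plane, and let $\pi=(\pi_{-J}',\pi_J')'$ be its vector representation. For $k\in\{1,\dots,G\}$ let $\delta_k(J)=\int y_k\,dP_J(y)$ be expected demand for good $k$ on $\mathcal{B}_J$. Then $$\underline\delta_k(J)\le\delta_k(J)\le\overline\delta_k(J),$$ where $\underline\delta_k(J)=\min\{\underline d_k(J)A_J\nu:\ A_{-J}\nu=\pi_{-J},\ \nu\ge0\}$ and $\overline\delta_k(J)=\max\{\overline d_k(J)A_J\nu:\ A_{-J}\nu=\pi_{-J},\ \nu\ge0\}$.
   Context: Budget planes $\mathcal B_j=\{y\in\mathbf R^G_+:p_j'y=1\}$, $p_j\in\mathbf R^G_{++}$. Patches are cells of the coarsest partition of $\bigcup_j\mathcal B_j$ such that each cell is, for every $j$, entirely on, strictly above or strictly below $\mathcal B_j$; patches on more than one budget plane are dropped, $x_{1|j},\dots,x_{I_j|j}$ are the remaining patches in $\mathcal B_j$, $I=\sum_jI_j$, with fixed representatives $y^*_{i|j}\in x_{i|j}$. A demand vector $(d_1,\dots,d_J)\in\prod_j\mathcal B_j$ is rationalizable if some strictly increasing $u:\mathbf R^G_+\to\mathbf R$ has $d_j\in\arg\max_{\mathcal B_j}u$ for all $j$. A stochastic demand system $(P_1,\dots,P_J)$ ($P_j$ a probability on $\mathcal B_j$) is stochastically rationalizable if some probability on $\prod_j\mathcal B_j$ concentrated on rationalizable demand vectors has marginals $P_1,\dots,P_J$. Its vector representation $\pi\in\mathbf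 R^I$ has $j$-th block $(P_j(x_{1|j}),\dots,P_j(x_{I_j|j}))$. $A\in\{0,1\}^{I\times H}$ has as columns (each once) exactly the binary $I$-vectors with one $1$ per block, at position $i_j$ in block $j$, such that $(y^*_{i_1|1},\dots,y^*_{i_J|J})$ is rationalizable. $A_J,\pi_J$ denote the rows/entries of block $J$ and $A_{-J},\pi_{-J}$ the rest. $\underline d_k(J)=(\underline d_k(1|J),\dots,\underline d_k(I_J|J))$ and $\overline d_k(J)=(\overline d_k(1|J),\dots,\overline d_k(I_J|J))$ are row vectors with $\underline d_k(i|J)=\inf\{y_k:y\in x_{i|J}\}$ and $\overline d_k(i|J)=\sup\{y_k:y\in x_{i|J}\}$. *)

(* Defs.v *)
From HB Require Import structures.
From mathcomp Require Import all_boot all_order all_algebra.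
From mathcomp Require Import all_classical all_reals all_analysis.
Set Implicit Arguments. Unset Strict Implicit. Unset Printing Implicit Defensive.
Import Order.TTheory GRing.Theory Num.Theory.
Local Open Scope classical_set_scope.
Local Open Scope ring_scope.

(* Consumption bundles in R^G are G-tuples of reals (with the product
   sigma-algebra generated by the coordinates, i.e. the Borel sets of R^G). *)

Section Demand.
Variables (R : realType) (G n : nat).
Local Notation vec := (G.-tuple R).
Variable p : 'I_n -> 'I_G -> R.

Definition dotp (j : 'I_n) (y : vec) : R := \sum_(k < G) p j k * tnth y k.

Definition nonnegv (y : vec) : Prop := forall k, 0 <= tnth y k.

Definition budget (j : 'I_n) : set vec := [set y | nonnegv y /\ dotp j y = 1].

Definition side (j : 'I_n) (y : vec) : option bool :=
  if dotp j y == 1 then None else Some (1 < dotp j y).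

Definition signvec := {ffun 'I_n -> option bool}.

(* The cell of the partition of the union of the budget planes with
   position pattern s (relevant when some s j = None). *)
Definition patchset (s : signvec) : set vec :=
  [set y | nonnegv y /\ forall j, side j y = s j].

(* s indexes a (retained) patchset x_{i|j} of B_j: the patchset lies on B_j, on no
   other budget plane, and is nonempty. *)
Definition retained (j : 'I_n) (s : signvec) : Prop :=
  [/\ s j = None, (forall j', j' != j -> s j' != None) & patchset s !=set0].

Definition multi_plane (s : signvec) : Prop :=
  exists j1 j2, [/\ j1 != j2, s j1 = None & s j2 = None].

Definition strictly_increasing (u : vec -> R) : Prop :=
  forall x y, nonnegv x -> (forall k, tnth x k <= tnth y k) -> x != y -> u x < u y.

Definition rationalizable (d : 'I_n -> vec) : Prop :=
  exists u : vec -> R, strictly_increasing u /\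
    forall j, budget j (d j) /\ (forall y, budget j y -> u y <= u (d j)).

Definition stoch_demand (P : 'I_n -> probability vec R) : Prop :=
  forall j, P j (budget j) = 1%E.

Definition stoch_rationalizable (P : 'I_n -> probability vec R) : Prop :=
  exists Q : probability (n.-tuple vec) R,
    (forall j (A : set vec), measurable A ->
        Q ((fun d : n.-tuple vec => tnth d j) @^-1` A) = P j A) /\
    exists S : set (n.-tuple vec),
      [/\ measurable S, S `<=` [set d | rationalizable (tnth d)] & Q S = 1%E].

Definition vrep (P : 'I_n -> probability vec R) (j : 'I_n) (s : signvec) : R :=
  fine (P j (patchset s)).

(* columns of A: one retained patchset per budget, whose representatives form a
   rationalizable demand vector *)
Definition choice_t := {ffun 'I_n -> signvec}.

Definition is_col (rep : signvec -> vec) (c : choice_t) : Prop :=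
  (forall j, retained j (c j)) /\ rationalizable (fun j => rep (c j)).

Definition feasible (rep : signvec -> vec) (pi : 'I_n -> signvec -> R)
    (J : 'I_n) (nu : choice_t -> R) : Prop :=
  (forall c, is_col rep c -> 0 <= nu c) /\
  (forall j s, j != J -> retained j s ->
     \sum_(c | `[< is_col rep c >] && (c j == s)) nu c = pi j s).

Definition dlow (k : 'I_G) (s : signvec) : R := inf [set tnth y k | y in patchset s].
Definition dupp (k : 'I_G) (s : signvec) : R := sup [set tnth y k | y in patchset s].

Definition objective (rep : signvec -> vec) (J : 'I_n) (d : signvec -> R)
    (nu : choice_t -> R) : R :=
  \sum_(c | `[< is_col rep c >]) d (c J) * nu c.

Definition delta_low rep pi J k : \bar R :=
  ereal_inf [set (objective rep J (dlow k) nu)%:E | nu in feasible rep pi J].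
Definition delta_upp rep pi J k : \bar R :=
  ereal_sup [set (objective rep J (dupp k) nu)%:E | nu in feasible rep pi J].

End Demand.

(* Main.v *)
Require Import Defs.
From HB Require Import structures.
From mathcomp Require Import all_boot all_order all_algebra.
From mathcomp Require Import all_classical all_reals all_analysis.
From mathcomp Require Import lra.
Import Order.TTheory GRing.Theory Num.Theory.
Local Open Scope classical_set_scope.
Local Open Scope ring_scope.
Set Implicit Arguments. Unset Strict Implicit.

Lemma dotp_ge0 (R : realType) G N (p : 'I_N -> 'I_G -> R) j y :
  (forall j g, 0 < p j g) -> nonnegv y -> 0 <= dotp p j y.
Proof. by move=> pp ny; apply: sumr_ge0 => k _; rewrite mulr_ge0 // ltW. Qed.

Lemma dotp_pos (R : realType) G N (p : 'I_N -> 'I_G -> R) i j y :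
  (forall j g, 0 < p j g) -> budget p i y -> 0 < dotp p j y.
Proof.
move=> pp [ny dy].
case: (pselect (exists k, 0 < tnth y k)) => [[k hk]|H]; last first.
  move: dy; rewrite /dotp big1 => [/eqP|k _]; first by rewrite eq_sym oner_eq0.
  have : ~ 0 < tnth y k by move=> h; apply: H; exists k.
  move/negP; rewrite -leNgt => hk.
  have -> : tnth y k = 0 by apply/eqP; rewrite eq_le hk ny.
  by rewrite mulr0.
rewrite /dotp (bigD1 k) //=.
have : 0 <= \sum_(i0 < G | i0 != k) p j i0 * tnth y i0.
  by apply: sumr_ge0 => l _; rewrite mulr_ge0 // ltW.
have := mulr_gt0 (pp j k) hk. lra.
Qed.

Lemma dotp_lt (R : realType) G N (p : 'I_N -> 'I_G -> R) j (x y : G.-tuple R) :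
  (forall j g, 0 < p j g) -> (forall k, tnth x k <= tnth y k) -> x != y ->
  dotp p j x < dotp p j y.
Proof.
move=> pp le ne.
have [k hk] : exists k, tnth x k != tnth y k.
  case: (pselect (exists k, tnth x k != tnth y k)) => // H.
  move/negP: ne; case; apply/eqP/eq_from_tnth => k.
  by apply/eqP/negP => h; apply: H; exists k; apply/negP.
rewrite /dotp (bigD1 k) //= [X in _ < X](bigD1 k) //=.
have : \sum_(i0 < G | i0 != k) p j i0 * tnth x i0 <= \sum_(i0 < G | i0 != k) p j i0 * tnth y i0.
  by apply: ler_sum => l _; rewrite ler_pM2l.
have : p j k * tnth x k < p j k * tnth y k by rewrite ltr_pM2l // lt_neqAle hk le.
lra.
Qed.

Lemma transfer (R : realType) G N (p : 'I_N.+1 -> 'I_G -> R) (d d' : 'I_N.+1 -> G.-tuple R) :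
  (forall j g, 0 < p j g) -> rationalizable p d -> (forall j, budget p j (d' j)) ->
  (forall i j, side p j (d' i) = side p j (d i)) -> rationalizable p d'.
Proof.
move=> pp [u [ui hu]] bd' hs.
pose U i := u (d i).
have weak i j : dotp p j (d i) = 1 -> U i <= U j.
  by move=> e; apply: (hu j).2; split => //; case: (hu i) => [[]].
have strict i j : dotp p j (d i) < 1 -> U i < U j.
  move=> lt1.
  have bi := (hu i).1.
  have pos := dotp_pos j pp bi.
  pose t := (dotp p j (d i))^-1.
  have t1 : 1 <= t by rewrite /t invf_ge1 // ltW.
  pose y := map_tuple (fun a => t * a) (d i).
  have ty k : tnth y k = t * tnth (d i) k by rewrite tnth_map.
  have dy : dotp p j y = 1.
    rewrite /dotp; under eq_bigr do rewrite ty mulrCA.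
    by rewrite -mulr_sumr /t mulVf // gt_eqF.
  have ny : nonnegv y by move=> k; rewrite ty mulr_ge0 // ?(le_trans ler01 t1) //; case: bi => nb _; exact: nb.
  apply: (lt_le_trans (y := u y)); last by apply: (hu j).2.
  apply: ui; first by case: bi.
    by move=> k; rewrite ty ler_peMl //; case: bi => nb _; exact: nb.
  by apply/negP => /eqP e; move: dy; rewrite -e => e2; move: lt1; rewrite e2 ltxx.
pose r i : R := (#|[set j | U j < U i]%SET|)%:R.
have r0 i : 0 <= r i by rewrite ler0n.
have rN i : r i <= N.+1%:R by rewrite ler_nat; apply: leq_trans (max_card _) _; rewrite card_ord.
have rle i j : U i <= U j -> r i <= r j.
  move=> h; rewrite ler_nat; apply: subset_leq_card; apply/fintype.subsetP => k.
  by rewrite !inE => hk; apply: lt_le_trans hk h.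
have rlt i j : U i < U j -> r i + 1 <= r j.
  move=> h; rewrite /r -[1]/(1%:R) -natrD ler_nat addn1.
  have hi : (i \in [set j0 | U j0 < U j]%SET) by rewrite inE.
  rewrite [#|[set j0 | U j0 < U j]%SET|](cardsD1 i) hi add1n ltnS.
  apply: subset_leq_card; apply/fintype.subsetP => k.
  rewrite !inE => hk; rewrite (lt_trans hk h) andbT.
  by apply/negP => /eqP e; move: hk; rewrite e ltxx.
pose h (t : R) := if 0 < t then t + N.+1%:R else t.
have hmono s t : s < t -> h s < h t.
  have := ler0n R N.+1; by rewrite /h; case: (ltP 0 s) => hs0; case: (ltP 0 t) => ht0 st; lra.
pose f j x := r j + h (dotp p j x - 1).
pose u' x := f [arg min_(j < ord0) f j x]%O x.
have u'le x j : u' x <= f j x.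
  by rewrite /u'; case: (arg_minP (fun j => f j x) (i0 := ord0) (P := xpredT)) => // j0 _ H; exact: H.
exists u'; split.
  move=> x y _ le ne; rewrite /u'; case: (arg_minP (fun j => f j y) (i0 := ord0) (P := xpredT)) => // jy _ _.
  apply: (le_lt_trans (u'le x jy)); rewrite /f ltrD2l; apply: hmono.
  by rewrite ltrD2r; apply: dotp_lt.
move=> i; split => // y [_ dy].
have -> : u' (d' i) = r i.
  apply/eqP; rewrite eq_le; apply/andP; split.
    by apply: le_trans (u'le _ i) _; rewrite /f (bd' i).2 subrr /h ltxx addr0.
  rewrite /u'; case: (arg_minP (fun j => f j (d' i)) (i0 := ord0) (P := xpredT)) => // j _ _.
  rewrite /f; have := hs i j; rewrite /side.
  have pos := dotp_pos j pp (bd' i).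
  case: eqP => e1; case: eqP => e2 //.
  - by move=> _; rewrite e1 subrr /h ltxx addr0; have := rle _ _ (weak _ _ e2); lra.
  - case=> e; case: (ltP 1 (dotp p j (d i))) e => e3 e.
      have e4 : 1 < dotp p j (d' i) by rewrite e.
      rewrite /h subr_gt0 e4; have := r0 j; have := rN i; lra.
    have e3' : dotp p j (d i) < 1 by rewrite lt_neqAle e3 andbT; apply/eqP.
    have e4 : dotp p j (d' i) < 1.
      by rewrite lt_neqAle; apply/andP; split; [apply/eqP|rewrite leNgt e].
    rewrite /h subr_gt0 ltNge (ltW e4) /=.
    have := rlt _ _ (strict _ _ e3'); lra.
by apply: le_trans (u'le _ i) _; rewrite /f dy subrr /h ltxx addr0.
Qed.
Lemma mdotp (R : realType) G N (p : 'I_N -> 'I_G -> R) j :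
  measurable_fun setT (dotp p j).
Proof.
rewrite /dotp; apply: measurable_sum => k.
apply: measurable_realfun.measurable_funM; first exact: measurable_cst.
exact: measurable_tnth.
Qed.

Lemma mpre (R : realType) G (f : G.-tuple R -> R) (Y : set R) :
  measurable_fun setT f -> measurable Y -> measurable (f @^-1` Y).
Proof. by move=> mf mY; have := mf measurableT Y mY; rewrite setTI. Qed.

Lemma mside (R : realType) G N (p : 'I_N -> 'I_G -> R) j o :
  measurable [set y | side p j y = o].
Proof.
case: o => [[]|].
- have -> : [set y | side p j y = Some true] = dotp p j @^-1` `]1, +oo[.
    apply/seteqP; split => y /=; rewrite /side in_itv /= andbT.
      by case: eqP => // _ [].
    by move=> h; rewrite gt_eqF // h.
  by apply: mpre; [exact: mdotp | exact: measurable_itv].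
- have -> : [set y | side p j y = Some false] = dotp p j @^-1` `]-oo, 1[.
    apply/seteqP; split => y /=; rewrite /side in_itv /=.
      by case: eqP => // h [] /negbT; rewrite -leNgt le_eqVlt => /orP[/eqP|]. 
    by move=> h; rewrite lt_eqF // ltNge (ltW h).
  by apply: mpre; [exact: mdotp | exact: measurable_itv].
- have -> : [set y | side p j y = None] = dotp p j @^-1` [set 1].
    by apply/seteqP; split => y /=; rewrite /side; case: eqP.
  by apply: mpre; [exact: mdotp | exact: measurable_set1].
Qed.

Lemma mnonneg (R : realType) G : measurable [set y : G.-tuple R | nonnegv y].
Proof.
have -> : [set y : G.-tuple R | nonnegv y] = \bigcap_(k in [set: 'I_G]) ((fun y : G.-tuple R => tnth y k) @^-1` `[0, +oo[).
  apply/seteqP; split => y /=.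
    by move=> h k _; rewrite /= in_itv /= andbT; exact: h.
  by move=> h k; have := h k I; rewrite /= in_itv /= andbT.
apply: fin_bigcap_measurable; first exact: finite_finset.
by move=> k _; apply: mpre; [exact: measurable_tnth | exact: measurable_itv].
Qed.

Lemma mpatch (R : realType) G N (p : 'I_N -> 'I_G -> R) s :
  measurable (patchset p s).
Proof.
have -> : patchset p s = [set y | nonnegv y] `&` \bigcap_(j in setT) [set y | side p j y = s j].
  by apply/seteqP; split => y /= [h1 h2]; split => // j; [move=> _|]; exact: h2.
apply: measurableI; first exact: mnonneg.
apply: fin_bigcap_measurable; first exact: finite_finset.
by move=> j _; exact: mside.
Qed.
Lemma in_bigU (T : Type) (I : eqType) (r : seq I) (P : pred I) (F : I -> set T) x :
  (\big[setU/set0]_(i <- r | P i) F i) x -> exists i, [/\ i \in r, P i & F i x].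
Proof.
elim: r => [|h t IH]; first by rewrite big_nil.
rewrite big_cons; case: ifP => Ph.
  case=> [Fx|/IH [i [it Pi Fi]]]; first by exists h; rewrite mem_head.
  by exists i; rewrite inE it orbT.
by move/IH => [i [it Pi Fi]]; exists i; rewrite inE it orbT.
Qed.

Lemma bigU_in (T : Type) (I : eqType) (r : seq I) (P : pred I) (F : I -> set T) x i :
  i \in r -> P i -> F i x -> (\big[setU/set0]_(i <- r | P i) F i) x.
Proof.
elim: r => [|h t IH] //; rewrite inE big_cons => /orP[/eqP ->|it] Pi Fi.
  by rewrite Pi; left.
by case: ifP => _; [right|]; exact: IH.
Qed.

Lemma measure_seqU d (T : measurableType d) (R : realType)
  (mu : {measure set T -> \bar R}) (I : eqType) (r : seq I) (P : pred I) (F : I -> set T) :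
  uniq r -> (forall i, measurable (F i)) -> (forall i j, i != j -> F i `&` F j = set0) ->
  mu (\big[setU/set0]_(i <- r | P i) F i) = (\sum_(i <- r | P i) mu (F i))%E.
Proof.
move=> + mF dF; elim: r => [|h t IH] /=; first by rewrite !big_nil measure0.
move=> /andP[ht ut]; rewrite !big_cons; case: ifP => Ph; last exact: IH.
rewrite measureU //.
- by congr (_ + _)%E; apply: IH.
- by apply: bigsetU_measurable => i _.
- apply/seteqP; split => x // [Fh Hb]; have [i [it _ Fi]] := in_bigU Hb.
  have hi : h != i by apply/negP => /eqP e; move: ht; rewrite e it.
  by rewrite -(dF _ _ hi); split.
Qed.

Lemma negl_bigU d (T : measurableType d) (R : realType)
  (mu : {measure set T -> \bar R}) (I : eqType) (r : seq I) (P : pred I) (F : I -> set T) :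
  (forall i, P i -> mu.-negligible (F i)) ->
  mu.-negligible (\big[setU/set0]_(i <- r | P i) F i).
Proof.
move=> h; elim/big_ind: _ => //; first exact: negligible_set0.
exact: negligibleU.
Qed.

Lemma negl0 d (T : measurableType d) (R : realType)
  (mu : {measure set T -> \bar R}) (A : set T) :
  measurable A -> mu.-negligible A -> mu A = 0%E.
Proof.
move=> mA [N [mN N0 AN]]; apply/eqP; rewrite eq_le measure_ge0 andbT -N0.
by apply: le_measure => //; rewrite inE.
Qed.
Definition sigv (R : realType) G N (p : 'I_N -> 'I_G -> R) (d : N.-tuple (G.-tuple R)) : choice_t N :=
  [ffun j => [ffun j' => side p j' (tnth d j)]].

Lemma mpreT (R : realType) G N j (A : set (G.-tuple R)) : measurable A ->
  measurable ((fun d : N.-tuple (G.-tuple R) => tnth d j) @^-1` A).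
Proof. by move=> mA; have := measurable_tnth j measurableT mA; rewrite setTI. Qed.

Lemma msig (R : realType) G N (p : 'I_N -> 'I_G -> R) c :
  measurable [set d | sigv p d = c].
Proof.
have -> : [set d | sigv p d = c] = \bigcap_(j in [set: 'I_N]) \bigcap_(j' in [set: 'I_N])
    ((fun d : N.-tuple (G.-tuple R) => tnth d j) @^-1` [set y | side p j' y = c j j']).
  apply/seteqP; split => d /=.
    by move=> <- j _ j' _; rewrite /sigv !ffunE.
  move=> h; apply/ffunP => j; apply/ffunP => j'; rewrite /sigv !ffunE.
  exact: h.
apply: fin_bigcap_measurable; first exact: finite_finset.
move=> j _; apply: fin_bigcap_measurable; first exact: finite_finset.
by move=> j' _; apply: mpreT; exact: mside.
Qed.

Lemma patch_uniq (R : realType) G N (p : 'I_N -> 'I_G -> R) s s' y :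
  patchset p s y -> patchset p s' y -> s = s'.
Proof. by move=> [_ h] [_ h']; apply/ffunP => j; rewrite -h h'. Qed.

Lemma patch_sig (R : realType) G N (p : 'I_N -> 'I_G -> R) y :
  nonnegv y -> patchset p [ffun j => side p j y] y.
Proof. by move=> ny; split => // j; rewrite ffunE. Qed.

Lemma regroup (R : realType) G N (p : 'I_N -> 'I_G -> R) rep J (F : signvec N -> R) nu :
  objective p rep J F nu =
  \sum_(s | `[< retained p J s >]) F s * \sum_(c | `[< is_col p rep c >] && (c J == s)) nu c.
Proof.
rewrite /objective (partition_big (fun c : choice_t N => c J) (fun s => `[< retained p J s >])) /=.
  apply: eq_bigr => s _; rewrite mulr_sumr; apply: eq_bigr => c /andP[_ /eqP ->] //.
by move=> c /asboolP [h _]; apply/asboolP; exact: h J.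
Qed.

Lemma budget_le (R : realType) G N (p : 'I_N -> 'I_G -> R) j y k :
  (forall j g, 0 < p j g) -> budget p j y -> tnth y k <= (p j k)^-1.
Proof.
move=> pp [ny dy].
have : p j k * tnth y k <= 1.
  rewrite -dy /dotp (bigD1 k) //= lerDl.
  by apply: sumr_ge0 => l _; rewrite mulr_ge0 // ltW.
by rewrite mulrC -ler_pdivlMr // mul1r.
Qed.

Unset Implicit Arguments.

Theorem corollary2 (R : realType) (G n : nat) (p : 'I_n.+1 -> 'I_G -> R)
    (rep : signvec n.+1 -> G.-tuple R)
    (P : 'I_n.+1 -> probability (G.-tuple R) R) (k : 'I_G) :
  (forall j g, 0 < p j g) ->
  (forall j s, retained p j s -> patchset p s (rep s)) ->
  stoch_demand p P ->
  stoch_rationalizable p P ->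
  (forall j s, multi_plane s -> P j (patchset p s) = 0%E) ->
  (delta_low p rep (vrep p P) ord_max k
     <= \int[P ord_max]_y (tnth y k)%:E)%E /\
  (\int[P ord_max]_y (tnth y k)%:E
     <= delta_upp p rep (vrep p P) ord_max k)%E.
Proof.
move=> pp hrep sd [Q [hQ [S [mS hS QS]]]] hmulti.
pose pre j (A : set (G.-tuple R)) := (fun d : n.+1.-tuple (G.-tuple R) => tnth d j) @^-1` A.
have mpre j A : measurable A -> measurable (pre j A) by exact: mpreT.
pose Bad := \big[setU/set0]_(j <- index_enum 'I_n.+1 | true)
   \big[setU/set0]_(s <- index_enum (signvec n.+1) | `[< multi_plane s >]) pre j (patchset p s).
have mBad : measurable Bad.
  apply: bigsetU_measurable => j _; apply: bigsetU_measurable => s _.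
  by apply: mpre; exact: mpatch.
have nBad : Q.-negligible Bad.
  rewrite /Bad; apply: negl_bigU => j _; apply: negl_bigU => s /asboolP ms.
  exists (pre j (patchset p s)); split => //; first by apply: mpre; exact: mpatch.
  by apply: eq_trans (hQ j _ (mpatch p s)) _; exact: hmulti.
have nS : Q.-negligible (~` S).
  exists (~` S); split => //; first exact: measurableC.
  by rewrite probability_setC // QS subee.
pose Good := S `&` ~` Bad.
have mGood : measurable Good by apply: measurableI => //; exact: measurableC.
have QG A : measurable A -> Q A = Q (A `&` Good).
  move=> mA; have e := measureDI Q mA mGood.
  suff h0 : Q (A `\` Good) = 0%E.
    by rewrite e; apply: (eq_trans _ (add0e _)); congr (_ + _)%E; exact: h0.
  apply: negl0; first exact: measurableD.
  apply: negligibleS (negligibleU nS nBad) => x [Ax nG].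
  case: (pselect (S x)) => Sx; [right|by left].
  by case: (pselect (Bad x)) => // nB; exfalso; apply: nG.
have Gbud d : Good d -> forall j, budget p j (tnth d j).
  by move=> [Sd _] j; have [u [_ hu]] := hS d Sd; exact: (hu j).1.
have Gpatch d j : Good d -> patchset p (sigv p d j) (tnth d j).
  move=> Gd; split; first by case: (Gbud d Gd j).
  by move=> j'; rewrite /sigv !ffunE.
have Gnm d : Good d -> forall j, ~ multi_plane (sigv p d j).
  move=> Gd j ms; have [_ Gd2] := Gd; apply: Gd2.
  apply: (bigU_in (i := j)); [exact: mem_index_enum | done |].
  apply: (bigU_in (i := sigv p d j)); first exact: mem_index_enum.
    by apply/asboolP.
  exact: Gpatch.
have G1 d : Good d -> is_col p rep (sigv p d).
  move=> Gd.
  have ret j : retained p j (sigv p d j).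
    split.
    - by rewrite /sigv !ffunE /side (Gbud d Gd j).2 eqxx.
    - move=> j' nj; apply/eqP => e; apply: (Gnm d Gd j); exists j, j'; split => //.
        by rewrite eq_sym.
      by rewrite /sigv !ffunE /side (Gbud d Gd j).2 eqxx.
    - by exists (tnth d j); exact: Gpatch.
  split => //.
  apply: (@transfer _ _ _ p (tnth d)) => //.
  - by case: Gd => Sd _; exact: hS.
  - move=> j; have [nr sr] := hrep j _ (ret j); split => //.
    have := sr j; case: (ret j) => -> _ _; rewrite /side; by case: eqP.
  - move=> i j; have [_ sr] := hrep i _ (ret i).
    by rewrite sr /sigv !ffunE.
have G2 d j s : Good d -> (sigv p d j = s <-> patchset p s (tnth d j)).
  move=> Gd; split; first by move=> <-; exact: Gpatch.
  by move=> ps; apply: patch_uniq ps; exact: Gpatch.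
pose nu c := fine (Q (Good `&` [set d | sigv p d = c])).
have mGc c : measurable (Good `&` [set d | sigv p d = c]) by apply: measurableI => //; exact: msig.
have hnu c : (nu c)%:E = Q (Good `&` [set d | sigv p d = c]).
  by rewrite /nu fineK //; exact: fin_num_measure.
have K j s : (\sum_(c | `[< is_col p rep c >] && (c j == s)) Q (Good `&` [set d | sigv p d = c]))%E
    = P j (patchset p s).
  rewrite -measure_seqU //; last first.
    move=> c c' ncc; apply/seteqP; split => x // [[_ e] [_ e']].
    by move: ncc; rewrite -e -e' eqxx.
    exact: index_enum_uniq.
  rewrite -hQ; last exact: mpatch.
  rewrite (QG _ (mpre _ _ (mpatch p s))); congr (Q _).
  apply/seteqP; split => x.
    move=> H; have [c [_ /andP[_ /eqP cj] [Gx e]]] := in_bigU H; split => //.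
    by rewrite /pre /=; apply/(G2 x j s Gx); rewrite e.
  move=> [px Gx]; apply: (bigU_in (i := sigv p x)); first exact: mem_index_enum.
    by rewrite asboolT /=; [apply/eqP/(G2 x j s Gx) | exact: G1].
  by split.
have Ksum j s : \sum_(c | `[< is_col p rep c >] && (c j == s)) nu c = fine (P j (patchset p s)).
  apply: EFin_inj; rewrite -sumEFin; under eq_bigr do rewrite hnu.
  by rewrite K fineK //; apply: fin_num_measure; exact: mpatch.
have feas : feasible p rep (vrep p P) ord_max nu.
  split; first by move=> c _; apply: fine_ge0; exact: measure_ge0.
  by move=> j s _ _; rewrite Ksum.
have obj (F : signvec n.+1 -> R) : objective p rep ord_max F nu =
    \sum_(s | `[< retained p ord_max s >]) F s * fine (P ord_max (patchset p s)).
  by rewrite regroup; apply: eq_bigr => s _; rewrite Ksum.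
have mf := fun D : set (G.-tuple R) => proj2 (measurable_realfun.measurable_EFinP D
   (fun y : G.-tuple R => tnth y k)) (measurable_funTS (measurable_tnth k)).
have mbud j : measurable (budget p j).
  have -> : budget p j = [set y | nonnegv y] `&` [set y | side p j y = None].
    apply/seteqP; split => y [ny h]; split => //=; first by rewrite /side h eqxx.
    by move: h => /=; rewrite /side; case: (@eqP _ (dotp p j y) 1).
  by apply: measurableI; [exact: mnonneg | exact: mside].
have pbud j s y : retained p j s -> patchset p s y -> budget p j y.
  move=> [sj _ _] [ny hy]; split => //; move: (hy j); rewrite sj /side; by case: eqP.
pose L := [seq s <- index_enum (signvec n.+1) | `[< retained p ord_max s >]].
pose U := \big[setU/set0]_(s <- L) patchset p s.
have mU : measurable U by apply: bigsetU_measurable => s _; exact: mpatch.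
have hU : P ord_max (~` U) = 0%E.
  apply: negl0; first exact: measurableC.
  pose BadJ := \big[setU/set0]_(s <- index_enum (signvec n.+1) | `[< multi_plane s >]) patchset p s.
  have nB : (P ord_max).-negligible (~` budget p ord_max).
    exists (~` budget p ord_max); split => //; first exact: measurableC.
    by rewrite probability_setC // sd subee.
  have nBJ : (P ord_max).-negligible BadJ.
    apply: negl_bigU => s /asboolP ms; exists (patchset p s); split => //; first exact: mpatch.
    exact: hmulti.
  apply: negligibleS (negligibleU nB nBJ) => y nUy.
  case: (pselect (budget p ord_max y)) => By; last by left.
  right; pose s := [ffun j => side p j y].
  have ps : patchset p s y := patch_sig p By.1.
  case: (pselect (multi_plane s)) => ms.
    apply: (bigU_in (i := s)); [exact: mem_index_enum | by apply/asboolP | exact: ps].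
  exfalso; apply: nUy; apply: (bigU_in (i := s)) => //.
  rewrite mem_filter mem_index_enum andbT; apply/asboolP.
  have sJ : s ord_max = None by rewrite /s ffunE /side By.2 eqxx.
  split => //; last by exists y.
  move=> j' nj; apply/eqP => e; apply: ms; exists ord_max, j'; split => //.
  by rewrite eq_sym.
have intU : (\int[P ord_max]_y (tnth y k)%:E = \int[P ord_max]_(y in U) (tnth y k)%:E)%E.
  rewrite -(setUv U) integral_setU //; last 2 first.
  - exact: measurableC.
  - by rewrite /disj_set setICr.
  by rewrite (null_set_integral (measurableC mU) (mf _) hU) adde0.
have intsum : (\int[P ord_max]_(y in U) (tnth y k)%:E = \sum_(s <- L) \int[P ord_max]_(y in patchset p s) (tnth y k)%:E)%E.
  apply: ge0_integral_bigsetU => //.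
  - exact: mpatch.
  - exact/filter_uniq/index_enum_uniq.
  - by move=> s s' _ _ [y [ys ys']]; exact: patch_uniq ys ys'.
  - by move=> y Uy; have [s [_ _ [ny _]]] := in_bigU Uy; rewrite lee_fin; exact: ny k.
have hret s : retained p ord_max s -> [/\ 0 <= dlow p k s, 0 <= dupp p k s,
    forall y, patchset p s y -> dlow p k s <= tnth y k &
    forall y, patchset p s y -> tnth y k <= dupp p k s].
  move=> rs; have [_ _ [y0 py0]] := rs.
  have ne : [set tnth y k | y in patchset p s] !=set0 by exists (tnth y0 k), y0.
  have lb : lbound [set tnth y k | y in patchset p s] 0.
    by move=> x [y [ny _] <-]; exact: ny k.
  have ub : ubound [set tnth y k | y in patchset p s] (p ord_max k)^-1.
    by move=> x [y py <-]; apply: budget_le pp _; exact: pbud py.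
  have hl : forall y, patchset p s y -> dlow p k s <= tnth y k.
    move=> y py; apply: (ge_inf (E := [set tnth y k | y in patchset p s])).
      by exists 0.
    by exists y.
  have hu : forall y, patchset p s y -> tnth y k <= dupp p k s.
    move=> y py; apply: (ub_le_sup (E := [set tnth y k | y in patchset p s])).
      by exists (p ord_max k)^-1.
    by exists y.
  split => //.
  - exact: lb_le_inf.
  - by apply: le_trans (hu _ py0); case: py0 => ny _; exact: ny k.
split.
- apply: (@le_trans _ _ (objective p rep ord_max (dlow p k) nu)%:E).
    by apply: ereal_inf_lbound; exists nu.
  rewrite obj intU intsum -sumEFin /L big_filter.
  apply: lee_sum => s /asboolP rs; have [l0 _ hl _] := hret s rs.
  rewrite EFinM fineK; last by apply: fin_num_measure; exact: mpatch.
  rewrite -(integral_cst (P ord_max) (mpatch p s)).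
  apply: ge0_le_integral; [exact: mpatch | by move=> y _; rewrite lee_fin
    | exact: measurable_cst | exact: mf | by move=> y py; rewrite lee_fin; exact: hl].
- apply: (@le_trans _ _ (objective p rep ord_max (dupp p k) nu)%:E); last first.
    by apply: ereal_sup_ubound; exists nu.
  rewrite obj intU intsum -sumEFin /L big_filter.
  apply: lee_sum => s /asboolP rs; have [_ u0 _ hu] := hret s rs.
  rewrite EFinM fineK; last by apply: fin_num_measure; exact: mpatch.
  rewrite -(integral_cst (P ord_max) (mpatch p s)).
  apply: ge0_le_integral; [exact: mpatch | by move=> y [ny _]; rewrite lee_fin; exact: ny k
    | exact: mf | exact: measurable_cst | by move=> y py; rewrite lee_fin; exact: hu].
Qed.
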